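(* Consider the finite game with players $\mathcal{M}=\{1,\dots,M\}$, common action set $\mathcal{N}$ and tolled costs $\bar c_i(\mathbf{a})=\sum_{l\in\mathcal{M}_{a_i}(\mathbf{a})}\frac{\sigma^2}{h_{la_i}}\frac{\beta_l}{[1-S_i(\mathbf{a})]^+}-\sum_{l\in\mathcal{M}_{a_i}(\mathbf{a})\setminus\{i\}}\frac{\sigma^2}{h_{la_i}}\frac{\beta_l}{[1-S_i(\mathbf{a})+\beta_i]^+}$, where $S_i(\mathbf{a})=\sum_{k\in\mathcal{M}_{a_i}(\mathbf{a})}\beta_k$, and suppose $h_{ij}=h_j$ and $\beta_i=\beta$ for all $i\in\mathcal{M}$, $j\in\mathcal{N}$. Then every Nash equilibrium of this game is system optimal, i.e., minimizes $C(\mathbf{a})=\sum_{i\in\mathcal{M}}\frac{\sigma^2}{h_{ia_i}}\frac{\beta_i}{[1-S_i(\mathbf{a})]^+}$ over all $\mathbf{a}\in\mathcal{N}^M$.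
   Context: Uplink cellular model: mobiles $\mathcal{M}=\{1,\dots,M\}$, BSs $\mathcal{N}=\{1,\dots,N\}$, power gains $h_{ij}>0$, noise power $\sigma^2>0$, target SINRs $\gamma_i>0$, $\beta_i=\gamma_i/(1+\gamma_i)$. Association profile $\mathbf{a}\in\mathcal{N}^M$, $\mathcal{M}_j(\mathbf{a})=\{l: a_l=j\}$, $[x]^+=\max(x,0)$, positive$/0=+\infty$, and $\bar c_i(\mathbf{a})=+\infty$ whenever its first sum is infinite. $(b,\mathbf{a}_{-i})$ replaces $a_i$ by $b$. $\mathbf{a}$ is a Nash equilibrium if $a_i\in\arg\min_{b\in\mathcal{N}}\bar c_i(b,\mathbf{a}_{-i})$ for all $i$. Standing assumption: there exists at least one feasible association, i.e. some $\mathbf{a}$ with $\sum_{l\in\mathcal{M}_j(\mathbf{a})}\beta_l<1$ for all $j$. *)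

(* Defs.v *)
From HB Require Import structures.
From mathcomp Require Import all_boot all_order all_algebra.
From mathcomp Require Import constructive_ereal.
Set Implicit Arguments. Unset Strict Implicit. Unset Printing Implicit Defensive.
Import Order.TTheory GRing.Theory Num.Theory.
Local Open Scope ring_scope.

Section Uplink.
Variables (R : realFieldType) (M N : nat).

Definition ppart (x : R) : R := Num.max x 0.

(* x / [d]^+ with the convention positive/0 = +oo (here [d]^+ >= 0 always;
   all numerators used below are positive). *)
Definition pdiv (x d : R) : \bar R :=
  if 0 < ppart d then (x / ppart d)%:E
  else if 0 < x then +oo%E else 0%E.

Definition beta (gamma : 'I_M -> R) (i : 'I_M) : R := gamma i / (1 + gamma i).

Definition upd (a : 'I_M -> 'I_N) (i : 'I_M) (b : 'I_N) : 'I_M -> 'I_N :=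
  fun k => if k == i then b else a k.

Definition Sload (gamma : 'I_M -> R) (a : 'I_M -> 'I_N) (i : 'I_M) : R :=
  \sum_(k | a k == a i) beta gamma k.

Definition cfirst (h : 'I_M -> 'I_N -> R) (sigma2 : R) (gamma : 'I_M -> R)
  (a : 'I_M -> 'I_N) (i : 'I_M) : \bar R :=
  (\sum_(l | a l == a i)
     pdiv (sigma2 / h l (a i) * beta gamma l) (1 - Sload gamma a i))%E.

Definition csecond (h : 'I_M -> 'I_N -> R) (sigma2 : R) (gamma : 'I_M -> R)
  (a : 'I_M -> 'I_N) (i : 'I_M) : \bar R :=
  (\sum_(l | (a l == a i) && (l != i))
     pdiv (sigma2 / h l (a i) * beta gamma l)
          (1 - Sload gamma a i + beta gamma i))%E.

Definition cbar (h : 'I_M -> 'I_N -> R) (sigma2 : R) (gamma : 'I_M -> R)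
  (a : 'I_M -> 'I_N) (i : 'I_M) : \bar R :=
  if cfirst h sigma2 gamma a i == +oo%E then +oo%E
  else (cfirst h sigma2 gamma a i - csecond h sigma2 gamma a i)%E.

Definition Csys (h : 'I_M -> 'I_N -> R) (sigma2 : R) (gamma : 'I_M -> R)
  (a : 'I_M -> 'I_N) : \bar R :=
  (\sum_(i < M) pdiv (sigma2 / h i (a i) * beta gamma i) (1 - Sload gamma a i))%E.

Definition is_NE (h : 'I_M -> 'I_N -> R) (sigma2 : R) (gamma : 'I_M -> R)
  (a : 'I_M -> 'I_N) : Prop :=
  forall (i : 'I_M) (b : 'I_N),
    (cbar h sigma2 gamma a i <= cbar h sigma2 gamma (upd a i b) i)%E.

Definition feasible (gamma : 'I_M -> R) (a : 'I_M -> 'I_N) : Prop :=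
  forall j : 'I_N, \sum_(l | a l == j) beta gamma l < 1.

End Uplink.

(* Main.v *)
Require Import Defs.
From HB Require Import structures.
From mathcomp Require Import all_boot all_order all_algebra.
From mathcomp Require Import constructive_ereal.
From mathcomp Require Import ring lra.
Import Order.TTheory GRing.Theory Num.Theory.
Local Open Scope ring_scope.

Section Real.
Variables (R : realFieldType) (bt c : R).
Hypotheses (btpos : 0 < bt) (cpos : 0 < c).

Definition uu (n : nat) : R := 1 - n%:R * bt.
Definition FF (n : nat) : R := n%:R * (c / uu n).
Definition DD (n : nat) : R := c / (uu n * (uu n + bt)).

Lemma uu_mono p q : (p <= q)%N -> uu q <= uu p.
Proof.
move=> pq; rewrite /uu lerD2l lerN2 ler_pM2r // ler_nat //.
Qed.

Lemma uuS n : uu n = uu n.+1 + bt.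
Proof. rewrite /uu -addn1 natrD; ring. Qed.

Lemma FF_step n : 0 < uu n.+1 -> FF n.+1 - FF n = DD n.+1.
Proof.
move=> u1; rewrite /FF /DD (uuS n).
have e : (n.+1)%:R * bt = 1 - uu n.+1 by rewrite /uu; ring.
have -> : (n%:R : R) = (n.+1)%:R - 1 by rewrite -addn1 natrD; ring.
move: e u1; set x := (n.+1)%:R; set u := uu n.+1 => e u1; clearbody x u.
have u1' : u != 0 by rewrite gt_eqF.
have u2 : u + bt != 0 by rewrite gt_eqF // addr_gt0.
apply/eqP; rewrite -subr_eq0.
have -> : x * (c / u) - (x - 1) * (c / (u + bt)) - c / (u * (u + bt))
   = c * (x * bt + u - 1) / (u * (u + bt)) by field; rewrite u1' u2.
by rewrite e; apply/eqP; rewrite (_ : 1 - u + u - 1 = 0) ?mulr0 ?mul0r //; ring.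
Qed.

Lemma DD_mono p q : (p <= q)%N -> 0 < uu q -> DD p <= DD q.
Proof.
move=> pq uq; have up := uu_mono p q pq.
rewrite /DD; move: up uq; set A := uu p; set B := uu q => up uq; clearbody A B.
have h1 : B * (B + bt) <= A * (A + bt).
  by apply: ler_pM; rewrite ?lerD2r // ltW // addr_gt0.
have h0 : 0 < B * (B + bt) by rewrite mulr_gt0 // addr_gt0.
rewrite ler_pM2l // lef_pV2 ?posrE //; exact: lt_le_trans h1.
Qed.

Lemma DD_pos n : 0 < uu n -> 0 < DD n.
Proof. by move=> u; rewrite /DD divr_gt0 // mulr_gt0 // addr_gt0. Qed.

Lemma L1 n d : 0 < uu (n + d) -> d%:R * DD n.+1 <= FF (n + d) - FF n.
Proof.
elim: d => [|d IH] u; first by rewrite addn0 mul0r subrr.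
have ud : 0 < uu (n + d) by apply: lt_le_trans u (uu_mono _ _ _); rewrite leq_add2l.
have := IH ud; rewrite addnS in u *.
have := FF_step _ u => st.
have m : DD n.+1 <= DD (n + d).+1 by apply: DD_mono => //; rewrite ltnS leq_addr.
rewrite (_ : FF (n + d).+1 - FF n = (FF (n+d).+1 - FF (n+d)) + (FF (n + d) - FF n)); last ring.
rewrite st mulrSr mulrDl mul1r addrC; lra.
Qed.

Lemma L2 n d : 0 < uu (n + d) -> FF (n + d) - FF n <= d%:R * DD (n + d).
Proof.
elim: d => [|d IH] u; first by rewrite addn0 mul0r subrr.
have ud : 0 < uu (n + d) by apply: lt_le_trans u (uu_mono _ _ _); rewrite leq_add2l.
have := IH ud; rewrite addnS in u *.
have := FF_step _ u => st.
have m : DD (n + d) <= DD (n + d).+1 by apply: DD_mono.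
have m2 : d%:R * DD (n + d) <= d%:R * DD (n + d).+1 by rewrite ler_wpM2l.
rewrite (_ : FF (n + d).+1 - FF n = (FF (n+d).+1 - FF (n+d)) + (FF (n + d) - FF n)); last ring.
rewrite st mulrSr mulrDl mul1r; lra.
Qed.

Lemma support n (lam : R) m : 0 < uu n ->
  ((0 < n)%N -> DD n <= lam) -> (0 < uu n.+1 -> lam <= DD n.+1) ->
  0 < uu m -> (m%:R - n%:R) * lam <= FF m - FF n.
Proof.
move=> un ha hb um; case: (leqP n m) => nm.
  rewrite -(subnKC nm) in um *; set d := (m - n)%N in um *.
  rewrite natrD addrAC subrr add0r.
  case: d um => [|d] um; first by rewrite mul0r addn0 subrr.
  have u1 : 0 < uu n.+1 by apply: lt_le_trans um (uu_mono _ _ _); rewrite addnS ltnS leq_addr.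
  apply: le_trans (L1 _ _ um); rewrite ler_wpM2l //; exact: hb.
rewrite -(subnKC (ltnW nm)) in un ha *; set d := (n - m)%N in un ha *.
have := L2 _ _ un; rewrite natrD.
have hd : DD (m + d) <= lam by apply: ha; rewrite addn_gt0 subn_gt0 nm orbT.
have : d%:R * DD (m + d) <= d%:R * lam by rewrite ler_wpM2l.
lra.
Qed.
End Real.

Section Game.
Variables (R : realFieldType) (M N : nat) (h : 'I_M -> 'I_N -> R) (sigma2 : R)
  (gamma : 'I_M -> R) (hh : 'I_N -> R) (bt : R).
Hypotheses (hhpos : forall j, 0 < hh j) (s2pos : 0 < sigma2) (btpos : 0 < bt)
  (hb : forall l j, h l j = hh j) (hbt : forall l, beta gamma l = bt).

Definition cnt (b : 'I_M -> 'I_N) (j : 'I_N) : nat := (\sum_(l | b l == j) 1)%N.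
Definition cc (j : 'I_N) : R := sigma2 / hh j * bt.

Lemma cc_pos j : 0 < cc j.
Proof. by rewrite /cc mulr_gt0 // divr_gt0. Qed.

Lemma sum_const_cnt (x : R) b j : \sum_(l | b l == j) x = x *+ cnt b j.
Proof. by rewrite /cnt; elim/big_rec2: _ => // l y z _ ->; rewrite mulrS. Qed.

Lemma Sload_eq b i : Sload gamma b i = (cnt b (b i))%:R * bt.
Proof.
by rewrite /Sload (eq_bigr (fun _ => bt)) ?sum_const_cnt ?mulr_natl // => l _.
Qed.

Lemma pdiv_fin (x d : R) : 0 < d -> Defs.pdiv x d = (x / d)%:E.
Proof. by move=> d0; rewrite /Defs.pdiv /ppart max_l ?ltW // d0. Qed.

Lemma pdiv_inf (x d : R) : d <= 0 -> 0 < x -> Defs.pdiv x d = +oo%E.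
Proof. by move=> d0 x0; rewrite /Defs.pdiv /ppart max_r // ltxx x0. Qed.

Lemma pdiv_ge0 (x d : R) : 0 < x -> (0 <= Defs.pdiv x d)%E.
Proof.
move=> x0; rewrite /Defs.pdiv; case: ifP => [d0|_]; last by rewrite x0 leey.
by rewrite lee_fin ltW // divr_gt0.
Qed.

Lemma sum_inf (P : pred 'I_M) (F : 'I_M -> \bar R) i : P i -> F i = +oo%E ->
  (forall l, P l -> (0 <= F l)%E) -> (\sum_(l | P l) F l)%E = +oo%E.
Proof.
move=> Pi Fi F0; rewrite (bigD1 i) //= Fi addye //.
have : (0 <= \sum_(l | P l && (l != i)) F l)%E.
  by apply: sume_ge0 => l /andP [] /F0.
by case: (\sum_(l | P l && (l != i)) F l)%E.
Qed.

Lemma cnt_pos b i : (0 < cnt b (b i))%N.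
Proof. by rewrite /cnt (bigD1 i). Qed.

Lemma cfirst_eq b i : cfirst h sigma2 gamma b i =
  (\sum_(l | b l == b i) Defs.pdiv (cc (b i)) (uu R bt (cnt b (b i))))%E.
Proof. by apply: eq_bigr => l _; rewrite hb hbt Sload_eq. Qed.

Lemma csecond_eq b i : csecond h sigma2 gamma b i =
  (\sum_(l | (b l == b i) && (l != i)) Defs.pdiv (cc (b i)) (uu R bt (cnt b (b i)) + bt))%E.
Proof. by apply: eq_bigr => l _; rewrite hb !hbt Sload_eq. Qed.

Lemma cbar_inf b i : uu R bt (cnt b (b i)) <= 0 -> cbar h sigma2 gamma b i = +oo%E.
Proof.
move=> u0; rewrite /cbar cfirst_eq (@sum_inf _ _ i) ?eqxx //.
  by rewrite pdiv_inf // cc_pos.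
by move=> l _; apply: pdiv_ge0; apply: cc_pos.
Qed.

Lemma cbar_fin b i : 0 < uu R bt (cnt b (b i)) ->
  cbar h sigma2 gamma b i = (DD R bt (cc (b i)) (cnt b (b i)))%:E.
Proof.
move=> u0; rewrite /cbar cfirst_eq csecond_eq.
rewrite (eq_bigr (fun _ => (cc (b i) / uu R bt (cnt b (b i)))%:E)); last first.
  by move=> l _; rewrite pdiv_fin.
rewrite [X in (_ - X)%E](eq_bigr (fun _ => (cc (b i) / (uu R bt (cnt b (b i)) + bt))%:E)); last first.
  by move=> l _; rewrite pdiv_fin // addr_gt0.
rewrite !sumEFin /=.
set y := cc (b i) / (uu R bt (cnt b (b i)) + bt).
have e : \sum_(l | (b l == b i) && (l != i)) y = y *+ cnt b (b i) - y.
  by rewrite -sum_const_cnt [X in _ = X - _](bigD1 i) //= addrAC subrr add0r.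
rewrite e sum_const_cnt /y; move: u0 (cnt_pos b i).
case: (cnt b (b i)) => // m u0 _.
rewrite -(FF_step _ _ (cc (b i)) btpos) // -EFinD.
have key : forall c u : R,
  c / u *+ m.+1 - (c / (u + bt) *+ m.+1 - c / (u + bt)) =
  m.+1%:R * (c / u) - m%:R * (c / (u + bt)).
  by move=> c u; rewrite !mulr_natl [c / (u + bt) *+ m.+1]mulrSr; ring.
by rewrite key /FF (uuS _ _ m).
Qed.

Lemma Csys_eq b : Csys h sigma2 gamma b =
  (\sum_(i < M) Defs.pdiv (cc (b i)) (uu R bt (cnt b (b i))))%E.
Proof. by apply: eq_bigr => i _; rewrite hb hbt Sload_eq. Qed.

Lemma Csys_fin b : (forall j, 0 < uu R bt (cnt b j)) ->
  Csys h sigma2 gamma b = (\sum_j FF R bt (cc j) (cnt b j))%:E.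
Proof.
move=> hu; rewrite Csys_eq.
rewrite (eq_bigr (fun i => (cc (b i) / uu R bt (cnt b (b i)))%:E)); last first.
  by move=> i _; rewrite pdiv_fin.
rewrite sumEFin; apply: congr1.
rewrite (partition_big b predT) //; apply: eq_bigr => j _.
rewrite (eq_bigl (fun i => b i == j)) //.
rewrite (eq_bigr (fun _ => cc j / uu R bt (cnt b j))); last by move=> i /eqP ->.
by rewrite sum_const_cnt /FF mulr_natl.
Qed.

Lemma cnt0 b j : cnt b j = 0%N -> forall i, b i != j.
Proof.
move=> c0 i; apply/negP => /eqP bij; have := cnt_pos b i.
by rewrite bij c0.
Qed.

Lemma Csys_inf b j : uu R bt (cnt b j) <= 0 -> Csys h sigma2 gamma b = +oo%E.
Proof.
move=> u0; have [i bij|nb] := pickP (fun i => b i == j); last first.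
  have : cnt b j = 0%N by rewrite /cnt big_pred0.
  move=> c0; move: u0; rewrite c0 /uu mul0r subr0 => /(lt_le_trans ltr01).
  by rewrite ltxx.
rewrite Csys_eq (@sum_inf _ _ i) //.
  by rewrite (eqP bij) pdiv_inf // cc_pos.
by move=> l _; apply: pdiv_ge0; apply: cc_pos.
Qed.

Lemma sum_cnt b : (\sum_j cnt b j)%N = M.
Proof.
have -> : M = (\sum_(i < M) 1)%N by rewrite sum1_card card_ord.
by rewrite (partition_big b predT).
Qed.

Lemma cnt_upd b i k : k != b i -> cnt (upd b i k) k = (cnt b k).+1.
Proof.
move=> kb; rewrite /cnt (bigD1 i) /=; last by rewrite /upd eqxx.
rewrite add1n; congr _.+1; apply: eq_bigl => l.
case: (eqVneq l i) => [->|li] /=; first by rewrite andbF eq_sym (negbTE kb).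
by rewrite andbT /upd (negbTE li).
Qed.

Lemma upd_i (b : 'I_M -> 'I_N) i k : upd b i k i = k.
Proof. by rewrite /upd eqxx. Qed.

Lemma cnt_ex b j : (0 < cnt b j)%N -> exists i, b i == j.
Proof.
case: (pickP (fun i => b i == j)) => [i bij|none]; first by exists i.
by rewrite /cnt big_pred0.
Qed.

Lemma sumbeta b j : \sum_(l | b l == j) beta gamma l = (cnt b j)%:R * bt.
Proof.
by rewrite (eq_bigr (fun _ => bt)) ?sum_const_cnt ?mulr_natl // => l _.
Qed.

Lemma ult m p : 0 < uu R bt m -> uu R bt p <= 0 -> (m < p)%N.
Proof.
move=> um up; rewrite -(ltr_nat R) -(ltr_pM2r btpos).
move: um up; rewrite /uu; lra.
Qed.

Lemma main_lemma (feas : exists a0 : 'I_M -> 'I_N, feasible gamma a0) (a : 'I_M -> 'I_N) :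
  is_NE h sigma2 gamma a ->
  forall a', (Csys h sigma2 gamma a <= Csys h sigma2 gamma a')%E.
Proof.
move=> ne a'.
have ufeas (b : 'I_M -> 'I_N) : feasible gamma b -> forall j, 0 < uu R bt (cnt b j).
  by move=> fb j; have := fb j; rewrite sumbeta /uu subr_gt0.
have ua : forall j, 0 < uu R bt (cnt a j).
  move=> j; rewrite ltNge; apply/negP => uj.
  have [i aij] : exists i, a i == j.
    apply: cnt_ex; move: uj; case: (cnt a j) => // ; rewrite /uu mul0r subr0.
    by move=> /(lt_le_trans ltr01); rewrite ltxx.
  have hk : forall k, k != j -> uu R bt (cnt a k).+1 <= 0.
    move=> k kj; have := ne i k.
    rewrite (@cbar_inf a i); last by rewrite (eqP aij).
    case: (ltrP 0 (uu R bt (cnt a k).+1)) => // pos.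
    rewrite (@cbar_fin (upd a i k) i); last by rewrite upd_i cnt_upd // (eqP aij).
    by [].
  have [a0 fa0] := feas.
  have : (\sum_k cnt a0 k < \sum_k cnt a k)%N.
    rewrite (bigD1 j) //= [X in (_ < X)%N](bigD1 j) //=.
    rewrite -addSn leq_add //; first by apply: ult (ufeas _ fa0 j) uj.
    apply: leq_sum => k kj; rewrite -ltnS; apply: ult (ufeas _ fa0 k) (hk k kj).
  by rewrite !sum_cnt ltnn.
have ne2 : forall i k, k != a i -> 0 < uu R bt (cnt a k).+1 ->
    DD R bt (cc (a i)) (cnt a (a i)) <= DD R bt (cc k) (cnt a k).+1.
  move=> i k kai uk; have := ne i k.
  rewrite (@cbar_fin a i (ua _)) (@cbar_fin (upd a i k) i); last by rewrite upd_i cnt_upd.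
  by rewrite upd_i cnt_upd // lee_fin.
have [lam [la lb]] : exists lam,
   (forall j, (0 < cnt a j)%N -> DD R bt (cc j) (cnt a j) <= lam) /\
   (forall k, 0 < uu R bt (cnt a k).+1 -> lam <= DD R bt (cc k) (cnt a k).+1).
  case: (pickP (fun j => 0 < cnt a j)%N) => [j0 hj0|none]; last first.
    exists 0; split => [j|k uk]; first by rewrite none.
    exact/ltW/(DD_pos _ _ _ btpos (cc_pos k)).
  case: (@arg_maxP _ _ 'I_N j0 (fun j => 0 < cnt a j)%N
     (fun j => DD R bt (cc j) (cnt a j)) hj0) => js hjs hmax.
  exists (DD R bt (cc js) (cnt a js)); split => [j hj|k uk]; first exact: hmax.
  case: (eqVneq k js) uk => [->|kjs] uk; first exact: (DD_mono _ _ _ btpos (cc_pos _) _ _ (leqnSn _) uk).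
  have [i aij] := @cnt_ex a js hjs.
  have := ne2 i k; rewrite (eqP aij); apply => //.
case: (boolP [forall j, 0 < uu R bt (cnt a' j)]) => [/forallP ua'|].
  rewrite (@Csys_fin a ua) (@Csys_fin a' ua') lee_fin -subr_ge0 -sumrB.
  apply: le_trans (_ : \sum_j ((cnt a' j)%:R - (cnt a j)%:R) * lam <= _).
    by rewrite -mulr_suml sumrB -!natr_sum !sum_cnt subrr mul0r.
  apply: ler_sum => j _; apply: (support _ _ _ btpos (cc_pos j)) => //.
  - exact: la.
  - exact: lb.
move=> nf; have /existsP [j] : [exists j, ~~ (0 < uu R bt (cnt a' j))] by rewrite -negb_forall.
rewrite -leNgt => hj.
by rewrite (@Csys_inf a' j hj) leey.
Qed.
End Game.

Theorem proposition15 (R : realFieldType) (M N : nat)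
  (h : 'I_M -> 'I_N -> R) (sigma2 : R) (gamma : 'I_M -> R)
  (hpos : forall i j, 0 < h i j) (sigma2pos : 0 < sigma2)
  (gammapos : forall i, 0 < gamma i)
  (feas : exists a0 : 'I_M -> 'I_N, feasible gamma a0)
  (h_indep : forall i k j, h i j = h k j)
  (gamma_const : forall i k, gamma i = gamma k)
  (a : 'I_M -> 'I_N) :
  is_NE h sigma2 gamma a ->
  forall a' : 'I_M -> 'I_N, (Csys h sigma2 gamma a <= Csys h sigma2 gamma a')%E.
Proof.
move=> ne a'.
pose hh j := if [pick i : 'I_M] is Some i then h i j else 1.
pose bt := if [pick i : 'I_M] is Some i then beta gamma i else 1.
have hb : forall l j, h l j = hh j.
  by move=> l j; rewrite /hh; case: pickP => [i _|/(_ l)] //; apply: h_indep.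
have hbt : forall l, beta gamma l = bt.
  by move=> l; rewrite /bt; case: pickP => [i _|/(_ l)] //; rewrite /beta (gamma_const l i).
have hhpos : forall j, 0 < hh j.
  by move=> j; rewrite /hh; case: pickP => [i _|_]; [exact: hpos | exact: ltr01].
have btpos : 0 < bt.
  rewrite /bt; case: pickP => [i _|_]; last exact: ltr01.
  by rewrite /beta divr_gt0 // addr_gt0.
exact: (@main_lemma R M N h sigma2 gamma hh bt hhpos sigma2pos btpos hb hbt feas a ne a').
Qed.
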